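(* Let $H$ be a finite simple graph on $n\ge 2$ vertices and $G=w(H)$. Let $f_i$ denote the number of $i$-dimensional faces of $\operatorname{Ind}(G)$. Then $f_{n-2}\ge f_{n-1}$.
   Context: For a graph $H$ with vertex set $\{x_1,\dots,x_n\}$, the whiskered graph $w(H)$ has vertex set $\{x_1,\dots,x_n,y_1,\dots,y_n\}$ and edge set $E(H)\cup\{\{x_i,y_i\}: i=1,\dots,n\}$. The independence complex $\operatorname{Ind}(G)$ is the simplicial complex whose faces are the independent sets of $G$ (sets containing no edge); a face $F$ has dimension $|F|-1$. *)

(* Defs.v *)
From mathcomp Require Import all_boot.
Set Implicit Arguments. Unset Strict Implicit. Unset Printing Implicit Defensive.

Definition simple_graph (T : finType) (e : rel T) : Prop :=
  symmetric e /\ irreflexive e.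

(* Whiskered graph w(H): vertices x_i = inl i, y_i = inr i. *)
Definition whisker (n : nat) (e : rel 'I_n) : rel ('I_n + 'I_n) :=
  fun u v => match u, v with
  | inl i, inl j => e i j
  | inl i, inr j => i == j
  | inr i, inl j => i == j
  | inr _, inr _ => false
  end.

Definition independent (T : finType) (g : rel T) (F : {set T}) : bool :=
  [forall u in F, forall v in F, ~~ g u v].

(* Number of i-dimensional faces (faces with i+1 vertices) of Ind(g). *)
Definition fvec (T : finType) (g : rel T) (i : nat) : nat :=
  #|[set F : {set T} | independent g F & #|F| == i.+1]|.

(* Main.v *)
Require Import Defs.
From mathcomp Require Import all_boot.

Section S.
Variables (n : nat) (e : rel 'I_n).
Hypothesis irr : irreflexive e.

Definition pidx (u : 'I_n + 'I_n) : 'I_n := match u with inl i => i | inr i => i end.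

Lemma indepP {F : {set 'I_n + 'I_n}} {u v} :
  independent (whisker e) F -> u \in F -> v \in F -> ~~ whisker e u v.
Proof.
move=> /forallP /(_ u) /implyP H uF vF.
by move: (H uF) => /forallP /(_ v) /implyP; apply.
Qed.

Lemma facetP (F : {set 'I_n + 'I_n}) i :
  independent (whisker e) F -> #|F| = n -> (inr i \in F) = ~~ (inl i \in F).
Proof.
move=> Hi Hc.
have inj : {in F &, injective pidx}.
  move=> u v uF vF; case: u uF => a aF; case: v vF => b bF /= Eab; subst b => //.
  - by move: (indepP Hi aF bF) => /=; rewrite eqxx.
  - by move: (indepP Hi aF bF) => /=; rewrite eqxx.
have : i \in pidx @: F.
  have E : pidx @: F = [set: 'I_n].
    apply/eqP; rewrite eqEcard subsetT /= cardsT card_ord card_in_imset //.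
    by rewrite Hc.
  by rewrite E inE.
case/imsetP => u uF ->.
case: u uF => a aF /=.
  rewrite aF; apply/negbTE/negP => bF; move: (indepP Hi aF bF) => /=; by rewrite eqxx.
by rewrite aF; apply/esym/negP => bF; move: (indepP Hi bF aF) => /=; rewrite eqxx.
Qed.

End S.
Arguments pidx {n} u.
Arguments facetP {n e F} i.

Theorem mainTheorem2 (n : nat) (e : rel 'I_n) :
  simple_graph e -> 2 <= n ->
  fvec (whisker e) (n - 1) <= fvec (whisker e) (n - 2).
Proof.
case=> _ irr.
case: n e irr => [|[|n]] e irr // _.
rewrite !subSS !subn0 /fvec.
pose o0 := @Ordinal n.+2 0 isT.
pose o1 := @Ordinal n.+2 1 isT.
pose el (F : {set 'I_n.+2 + 'I_n.+2}) i := if inl i \in F then inl i else inr i.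
pose ind (F : {set 'I_n.+2 + 'I_n.+2}) := if (inl o0 \in F) == (inl o1 \in F) then o0 else o1.
pose f F := F :\ el F (ind F).
set A := [set F | _ & _]; set B := [set F | _ & _].
have elF F i : independent (whisker e) F -> #|F| = n.+2 -> el F i \in F.
  move=> Hi Hc; rewrite /el; case: ifP => // /negbT.
  by rewrite -(facetP i Hi Hc).
have key F i : independent (whisker e) F -> #|F| = n.+2 -> forall u, pidx u = i ->
    (u \in F :\ el F i) = false.
  move=> Hi Hc u <-; rewrite !inE /el; case: u => a /=.
    by case: ifP => H; rewrite ?eqxx ?H ?andbF ?andbT.
  by rewrite (facetP a Hi Hc); case: ifP => H; rewrite ?eqxx ?H ?andbF ?andbT.
have other F i u : pidx u != i -> (u \in F :\ el F i) = (u \in F).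
  move=> Hu; rewrite !inE; case: eqP => // E; exfalso; move: Hu; rewrite E /el.
  by case: ifP; rewrite /= eqxx.
have -> : #|A| = #|f @: A|.
  apply/esym/card_in_imset => F G; rewrite !inE => /andP [HiF /eqP HcF] /andP [HiG /eqP HcG] E.
  have Eij : ind F = ind G.
    apply/eqP/negP => /negP Hne.
    have := key F (ind F) HiF HcF (inl (ind F)) erefl.
    have := key F (ind F) HiF HcF (inr (ind F)) erefl.
    rewrite /f in E; rewrite E !other ?(facetP _ HiG HcG) //.
    by case: (inl (ind F) \in G).
  have Ek k : k != ind F -> (inl k \in F) = (inl k \in G).
    move=> Hk; rewrite -(other F (ind F) (inl k)) // -(other G (ind G) (inl k)) -?Eij //.
    by have E2 := E; rewrite /f -Eij in E2; rewrite E2.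
  have Ex k : (inl k \in F) = (inl k \in G).
    case: (eqVneq k (ind F)) => [->|]; last exact: Ek.
    move: Eij; rewrite /ind.
    have n01 : o0 != o1 by [].
    case: (eqVneq (inl o0 \in F) (inl o1 \in F)) => EF;
    case: (eqVneq (inl o0 \in G) (inl o1 \in G)) => EG //= _.
      by rewrite EF EG; apply: Ek; rewrite /ind EF eqxx.
    have H0 : (inl o0 \in F) = (inl o0 \in G) by apply: Ek; rewrite /ind (negPf EF).
    move: EF EG H0; case: (inl o0 \in F); case: (inl o1 \in F);
      case: (inl o0 \in G); by case: (inl o1 \in G).
  apply/setP => -[k|k]; first exact: Ex.
  by rewrite (facetP k HiF HcF) (facetP k HiG HcG) Ex.
apply/subset_leq_card/subsetP => G /imsetP [F]; rewrite inE => /andP [Hi /eqP Hc] ->.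
rewrite inE; apply/andP; split.
  apply/forallP => u; apply/implyP => /setD1P [_ uF]; apply/forallP => v; apply/implyP => /setD1P [_ vF].
  exact: (indepP _ _ Hi uF vF).
by have H := elF F (ind F) Hi Hc; move: Hc; rewrite /f (cardsD1 (el F (ind F))) H /= => -[]; rewrite ?add0n ?add1n => ->.
Qed.
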